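(* Let $\mathcal D$ be a finite doset on a poset $\mathcal P$ which has a unique minimal element $\alpha_0$, and let $A$ be an algebra with straightening law on $\mathcal D$. Write $A=\mathbb{C}[\mathcal D]/J$, where $\mathbb{C}[\mathcal D]$ is the polynomial ring in variables $x_{(\alpha,\beta)}$, $(\alpha,\beta)\in\mathcal D$, and $J$ is the kernel of the surjection $x_{(\alpha,\beta)}\mapsto p_{(\alpha,\beta)}$. Then $J$ is saturated: if $f\in\mathbb{C}[\mathcal D]$ and $N\in\mathbb{N}$ satisfy $x^N f\in J$ for every variable $x$, then $f\in J$.
   Context: A doset on a poset $\mathcal P$ is a set $\mathcal D$ with $\Delta_{\mathcal P}\subseteq\mathcal D\subseteq\{(\alpha,\beta)\in\mathcal P\times\mathcal P\mid\alpha\le\beta\}$ ($\Delta_{\mathcal P}$ the diagonal) such that whenever $\alpha\le\beta\le\gamma$, $(\alpha,\gamma)\in\mathcal D$ iff both $(\alpha,\beta)\in\mathcal D$ and $(\beta,\gamma)\in\mathcal D$; it is ordered by $(\alpha,\beta)\le(\gamma,\delta)$ iff $\beta\le\gamma$; one writes $\alpha$ for $(\alpha,\alpha)$. A monomial $p_{(\alpha_1,\beta_1)}\cdots p_{(\alpha_k,\beta_k)}$ is standard if $\alpha_1\le\beta_1\le\alpha_2\le\dots\le\alpha_k\le\beta_k$. A graded $\mathbb{C}$-algebra $A=\bigoplus_{q\ge0}A_q$ is an algebra with straightening law on $\mathcal D$ if there is an injection $\mathcal D\ni(\alpha,\beta)\mapsto p_{(\alpha,\beta)}\in A_1$ such that: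 (1) the $p_{(\alpha,\beta)}$ generate $A$; (2) the standard monomials form a $\mathbb{C}$-basis of $A$; (3) if a monomial $p_{(\alpha_1,\beta_1)}\cdots p_{(\alpha_k,\beta_k)}$ (factors ordered so that the sequence $\alpha_1,\beta_1,\dots,\alpha_k,\beta_k$ is the one being compared) equals $\sum_j c_j p_{(\alpha_{j1},\beta_{j1})}\cdots p_{(\alpha_{jk},\beta_{jk})}$ as a combination of distinct standard monomials, then each sequence $(\alpha_{j1},\beta_{j1},\dots,\alpha_{jk},\beta_{jk})$ is lexicographically smaller than $(\alpha_1,\beta_1,\dots,\alpha_k,\beta_k)$ (at the first differing position the new entry is smaller); (4) if $\alpha_1\le\alpha_2\le\alpha_3\le\alpha_4$ and for some permutation $\sigma\in S_4$ both $(\alpha_{\sigma(1)},\alpha_{\sigma(2)})$ and $(\alpha_{\sigma(3)},\alpha_{\sigma(4)})$ lie in $\mathcal D$, then $p_{(\alpha_{\sigma(1)},\alpha_{\sigma(2)})}p_{(\alpha_{\sigma(3)},\alpha_{\sigma(4)})}=\pm p_{(\alpha_1,\alpha_2)}p_{(\alpha_3,\alpha_4)}+\sum_i r_i m_i$ with the $m_i$ quadratic standard monomials distinct from $p_{(\alpha_1,\alpha_2)}p_{(\alpha_3,\alpha_4)}$. *)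

(* Defs.v *)
From mathcomp Require Import all_boot all_order all_algebra.
From mathcomp Require Import complex Rstruct.
From mathcomp Require Export mpoly.

Set Implicit Arguments.
Unset Strict Implicit.
Unset Printing Implicit Defensive.

Import Order.TTheory GRing.Theory Num.Theory.
Local Open Scope ring_scope.

Definition CC : numClosedFieldType := complex Rdefinitions.R.

Section Doset.
Variables (disp : Order.disp_t) (P : finPOrderType disp).

Definition is_doset (D : {set P * P}) : Prop :=
  [/\ forall a : P, (a, a) \in D,
      forall x : P * P, x \in D -> (x.1 <= x.2)%O &
      forall a b c : P, (a <= b)%O -> (b <= c)%O ->
        ((a, c) \in D) = ((a, b) \in D) && ((b, c) \in D)].

Definition doset_le (x y : P * P) : bool := (x.2 <= y.1)%O.

Definition unique_minimal (a0 : P) : Prop :=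
  forall b : P, (forall c : P, ~~ (c < b)%O) <-> b = a0.

Definition standard (D : {set P * P}) (s : seq (P * P)) : bool :=
  all (fun x => x \in D) s && sorted doset_le s.

Definition flat_seq (s : seq (P * P)) : seq P :=
  flatten [seq [:: x.1; x.2] | x <- s].

Fixpoint lex_lt (u v : seq P) : bool :=
  match u, v with
  | a :: u', b :: v' => (a < b)%O || ((a == b) && lex_lt u' v')
  | _, _ => false
  end.

Variables (A : comAlgType CC) (p : P * P -> A).

Definition pmon (s : seq (P * P)) : A := \prod_(x <- s) p x.

Definition lincomb (S : seq (CC * seq (P * P))) : A :=
  \sum_(x <- S) x.1 *: pmon x.2.

End Doset.

Definition graded (A : comAlgType CC) (G : nat -> {pred A}) : Prop :=
  [/\ (forall q, 0 \in G q) /\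
      (forall q (x y : A), x \in G q -> y \in G q -> x + y \in G q) /\
      (forall q (c : CC) (x : A), x \in G q -> c *: x \in G q),
      (forall q r (x y : A), x \in G q -> y \in G r -> x * y \in G (q + r)%N),
      (forall a : A, exists (n : nat) (f : nat -> A),
          (forall q, f q \in G q) /\ a = \sum_(q < n) f q) &
      (forall (n : nat) (f : nat -> A), (forall q, f q \in G q) ->
          \sum_(q < n) f q = 0 -> forall q, (q < n)%N -> f q = 0)].

(* The evaluation C[D] -> A, x_(alpha,beta) |-> p_(alpha,beta); the variables
   of C[D] are indexed by 'I_#|D|, the i-th variable being x_(enum_val i). *)
Definition asl_eval (disp : Order.disp_t) (P : finPOrderType disp)
  (D : {set P * P}) (A : comAlgType CC) (p : P * P -> A)
  (f : {mpoly CC[#|D|]}) : A :=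
  mmap (fun c : CC => c%:A) (fun i : 'I_#|D| => p (enum_val i)) f.
Arguments asl_eval {disp P} D {A} p f.

Definition is_ASL (disp : Order.disp_t) (P : finPOrderType disp)
  (D : {set P * P}) (A : comAlgType CC) (G : nat -> {pred A})
  (p : P * P -> A) : Prop :=
  [/\ graded G /\
      ({in D &, injective p} /\ (forall x, x \in D -> p x \in G 1%N)),
      (forall a : A, exists f : {mpoly CC[#|D|]}, asl_eval D p f = a),
      (forall a : A, exists S : seq (CC * seq (P * P)),
          all (fun x => standard D x.2) S /\ a = lincomb p S)
      /\
      (forall S : seq (CC * seq (P * P)),
          uniq (map snd S) -> all (fun x => standard D x.2) S ->
          lincomb p S = 0 -> all (fun x => x.1 == 0) S),
      (forall (s : seq (P * P)) (S : seq (CC * seq (P * P))),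
          all (fun x => x \in D) s -> ~~ standard D s ->
          uniq (map snd S) -> all (fun x => standard D x.2) S ->
          all (fun x => size x.2 == size s) S ->
          all (fun x => x.1 != 0) S ->
          pmon p s = lincomb p S ->
          all (fun x => lex_lt (flat_seq x.2) (flat_seq s)) S) &
      (forall a1 a2 a3 a4 b1 b2 b3 b4 : P,
          (a1 <= a2)%O -> (a2 <= a3)%O -> (a3 <= a4)%O ->
          perm_eq [:: b1; b2; b3; b4] [:: a1; a2; a3; a4] ->
          (b1, b2) \in D -> (b3, b4) \in D ->
          exists (e : bool) (S : seq (CC * seq (P * P))),
            all (fun x => standard D x.2 && (size x.2 == 2%N)
                          && (x.2 != [:: (a1, a2); (a3, a4)])) S /\
            p (b1, b2) * p (b3, b4)
              = (-1) ^+ e * (p (a1, a2) * p (a3, a4)) + lincomb p S)].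

(* Main.v *)
Require Import Defs.
From mathcomp Require Import all_boot all_order all_algebra.
From mathcomp Require Import mpoly.
Import Order.TTheory GRing.Theory.
Local Open Scope ring_scope.

Lemma eval_XM (disp : Order.disp_t) (P : finPOrderType disp)
  (D : {set P * P}) (A : comAlgType CC) (p : P * P -> A) (i : 'I_#|D|) N f :
  asl_eval D p ('X_i ^+ N * f) = p (enum_val i) ^+ N * asl_eval D p f.
Proof.
rewrite /asl_eval.
have -> : (fun c : CC => c%:A) = in_alg A by [].
rewrite rmorphM rmorphXn /=.
congr (_ ^+ _ * _).
by rewrite mmapX mmap1U.
Qed.

Definition upd (disp : Order.disp_t) (P : finPOrderType disp)
  (c : CC) (s : seq (P * P)) (T : seq (CC * seq (P * P))) :=
  map (fun y => if y.2 == s then (y.1 + c, y.2) else y) T.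

Arguments upd {disp P}.

Lemma upd_snd (disp : Order.disp_t) (P : finPOrderType disp) c (s : seq (P * P)) T :
  map snd (upd c s T) = map snd T.
Proof. by elim: T => //= y T ->; case: eqP. Qed.

Lemma upd_lincomb (disp : Order.disp_t) (P : finPOrderType disp)
  (A : comAlgType CC) (p : P * P -> A) c (s : seq (P * P)) T :
  uniq (map snd T) ->
  lincomb p (upd c s T) = lincomb p T + (if s \in map snd T then c *: pmon p s else 0).
Proof.
elim: T => [|y T IH] /=; first by rewrite /lincomb !big_nil addr0.
move=> /andP [yT uT]; rewrite /lincomb !big_cons -/(lincomb _ _) -/(lincomb _ _).
rewrite -/(upd c s T) IH // in_cons.
case: (eqVneq y.2 s) => [e|ne] /=.
  by rewrite -e (negbTE yT) addr0 scalerDl addrAC.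
by rewrite addrA.
Qed.


Lemma merge_uniq (disp : Order.disp_t) (P : finPOrderType disp)
  (D : {set P * P}) (A : comAlgType CC) (p : P * P -> A) S :
  all (fun x => standard D x.2) S ->
  exists S', [/\ uniq (map snd S'), all (fun x => standard D x.2) S' &
              lincomb p S' = lincomb p S].
Proof.
elim: S => [|x T IH] /=; first by move=> _; exists [::].
move=> /andP [sx /IH [T' [u st e]]].
have -> : lincomb p (x :: T) = x.1 *: pmon p x.2 + lincomb p T by rewrite /lincomb big_cons.
rewrite -e.
case: (boolP (x.2 \in map snd T')) => xin.
  exists (upd x.1 x.2 T'); split.
  - by rewrite upd_snd.
  - rewrite /upd all_map; apply/allP => z zT /=; case: eqP => _ /=; exact: (allP st z zT).
  - by rewrite upd_lincomb // xin addrC.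
exists (x :: T'); split => /=; first by rewrite xin.
  by rewrite sx.
by rewrite /lincomb big_cons.
Qed.

Arguments merge_uniq {disp P D A} p {S}.

Lemma min_le (disp : Order.disp_t) (P : finPOrderType disp) (a0 : P) :
  unique_minimal a0 -> forall b, (a0 <= b)%O.
Proof.
move=> H b; have [n] := ubnP #|[set c | (c < b)%O]|.
elim: n b => [b|n IH b Hn]; first by rewrite ltn0.
case: (boolP [exists c, (c < b)%O]) => [/existsP [c cb] | /existsPn nc].
  apply: le_trans (IH c _) (ltW cb); rewrite ltnS in Hn; apply: leq_trans Hn.
  apply: proper_card; apply/properP; split.
    by apply/subsetP => d; rewrite !inE => dc; exact: lt_trans dc cb.
  by exists c; rewrite !inE ?cb ?ltxx.
by have -> : b = a0 by apply/H.
Qed.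

Theorem theorem3p7 (disp : Order.disp_t) (P : finPOrderType disp)
  (D : {set P * P}) (A : comAlgType CC) (G : nat -> {pred A})
  (p : P * P -> A) :
  is_doset D ->
  (exists a0 : P, unique_minimal a0) ->
  is_ASL D G p ->
  forall (f : {mpoly CC[#|D|]}) (N : nat),
    (forall i : 'I_#|D|, asl_eval D p ('X_i ^+ N * f) = 0) ->
    asl_eval D p f = 0.
Proof.
move=> [Hrefl Hle Htrans] [a0 Ha0] [_ _ [Hspan Hind] _ _] f N Hf.
have a0D : (a0, a0) \in D by apply: Hrefl.
have Hi : enum_val (enum_rank_in a0D (a0, a0)) = (a0, a0) by rewrite enum_rankK_in.
have := Hf (enum_rank_in a0D (a0, a0)); rewrite eval_XM Hi.
move: (asl_eval D p f) => a; clear Hf.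
suff nzd : forall y, p (a0, a0) * y = 0 -> y = 0.
  elim: N a => [|N IHN] a; first by rewrite expr0 mul1r.
  by rewrite exprSr -mulrA => /IHN /nzd.
move=> y; have [S [hs ->]] := Hspan y.
have [S' [u st <-]] := merge_uniq p hs.
move=> H0.
have := Hind [seq (x.1, (a0, a0) :: x.2) | x <- S'].
rewrite -map_comp.
have -> : [seq (snd \o (fun x : CC * seq (P * P) => (x.1, (a0, a0) :: x.2))) i | i <- S']
        = map (cons (a0, a0)) (map snd S') by rewrite -map_comp.
have injc : injective (cons (a0, a0)) by move=> s t [].
rewrite (map_inj_uniq injc) u => /(_ isT) Hind'.
have Hst : all (fun x => standard D x.2) [seq (x.1, (a0, a0) :: x.2) | x <- S'].
  rewrite all_map; apply/allP => x xS /=.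
  have := allP st x xS; rewrite /standard /= a0D /= => /andP [-> sx].
  case: x.2 sx xS => //= b s ->; rewrite andbT.
  by move=> _; rewrite /doset_le /=; apply: min_le.
have Hl : lincomb p [seq (x.1, (a0, a0) :: x.2) | x <- S'] = 0.
  rewrite /lincomb big_map.
  under eq_bigr => x _ do rewrite /pmon big_cons -/(pmon _ _) scalerAr.
  by rewrite -mulr_sumr.
have := Hind' Hst Hl.
rewrite all_map => /allP H1; rewrite /lincomb big_seq big1 // => x xS.
by move: (H1 x xS) => /= /eqP ->; rewrite scale0r.
Qed.
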